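(* Let $(X,\mathcal{E})$ be an extremely normal ballean and let $\mathcal{E}'$ be a coarse structure on $X$ with $\mathcal{E}\subseteq\mathcal{E}'$ such that $(X,\mathcal{E}')$ is maximal. Then the bounded subsets of $(X,\mathcal{E})$ and of $(X,\mathcal{E}')$ coincide, and $\mathcal{E}'=\Uparrow\mathcal{B}_{(X,\mathcal{E})}$.
   Context: A ballean $(X,\mathcal{E})$ is a set with a coarse structure. $E[x]=\{y:(x,y)\in E\}$, $E[A]=\bigcup_{a\in A}E[a]$. $Y$ is bounded if $Y\subseteq E[x]$ for some $x$ and $E\in\mathcal{E}$; $\mathcal{B}_{(X,\mathcal{E})}$ denotes the family of bounded sets. $A$ is large if $X=E[A]$ for some $E\in\mathcal{E}$. An unbounded ballean is extremely normal if every unbounded subset is large, and maximal if $X$ is bounded in every coarse structure strictly containing $\mathcal{E}$. For a bornology $\mathcal{B}$ on $X$ (a family of subsets closed under finite unions and subsets with $\bigcup\mathcal{B}=X$), a coarse structure is compatible with $\mathcal{B}$ if its family of bounded sets equals $\mathcal{B}$; $\Uparrow\mathcal{B}$ denotes the largest coarse structure on $X$ compatible with $\mathcal{B}$ (generated by all $E\subseteq X\times X$ with $E=E^{-1}$, $\Delta_X\subseteq E$, and $E[B]\in\mathcal{B}$ for each $B\in\mathcal{B}$). *)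

(* Defs.v *)
From Stdlib Require Import Classical.
Set Implicit Arguments.

Section Coarse.
Variable X : Type.

Definition entourage := X -> X -> Prop.

Definition diag : entourage := fun x y => x = y.
Definition inv (E : entourage) : entourage := fun x y => E y x.
Definition rel_union (E F : entourage) : entourage := fun x y => E x y \/ F x y.
Definition comp (E F : entourage) : entourage :=
  fun x z => exists y, E x y /\ F y z.
Definition rel_sub (E F : entourage) : Prop := forall x y, E x y -> F x y.

Definition ball (E : entourage) (x : X) : X -> Prop := fun y => E x y.
Definition image (E : entourage) (A : X -> Prop) : X -> Prop :=
  fun y => exists a, A a /\ E a y.

Definition is_coarse (C : entourage -> Prop) : Prop :=
  C diag /\
  (forall E, C E -> rel_sub diag E) /\
  (forall E F, C E -> rel_sub diag F -> rel_sub F E -> C F) /\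
  (forall E, C E -> C (inv E)) /\
  (forall E F, C E -> C F -> C (rel_union E F)) /\
  (forall E F, C E -> C F -> C (comp E F)) /\
  (forall x y, exists E, C E /\ E x y).

Definition bounded (C : entourage -> Prop) (Y : X -> Prop) : Prop :=
  exists x E, C E /\ (forall y, Y y -> ball E x y).

Definition large (C : entourage -> Prop) (A : X -> Prop) : Prop :=
  exists E, C E /\ (forall z, image E A z).

Definition unbounded_ballean (C : entourage -> Prop) : Prop :=
  is_coarse C /\ ~ bounded C (fun _ => True).

Definition extremely_normal (C : entourage -> Prop) : Prop :=
  unbounded_ballean C /\
  (forall Y, ~ bounded C Y -> large C Y).

Definition maximal (C : entourage -> Prop) : Prop :=
  unbounded_ballean C /\
  (forall C', is_coarse C' -> (forall E, C E -> C' E) ->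
     (exists E, C' E /\ ~ C E) -> bounded C' (fun _ => True)).

Definition generated (G : entourage -> Prop) : entourage -> Prop :=
  fun E => forall C, is_coarse C -> (forall F, G F -> C F) -> C E.

(* generators of the largest coarse structure compatible with B *)
Definition uparrow_gen (B : (X -> Prop) -> Prop) (E : entourage) : Prop :=
  (forall x y, E x y <-> E y x) /\ rel_sub diag E /\
  (forall A, B A -> B (image E A)).

Definition uparrow (B : (X -> Prop) -> Prop) : entourage -> Prop :=
  generated (uparrow_gen B).

End Coarse.

(* Main.v *)
Require Import Defs.
From Stdlib Require Import Classical.
Set Implicit Arguments.

Section H.
Variable X : Type.
Implicit Types (C : entourage X -> Prop) (E F : entourage X) (A B Y : X -> Prop).

Lemma bnd_sub C Y Z : (forall y, Y y -> Z y) -> bounded C Z -> bounded C Y.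
Proof. intros H [x [E [HE HZ]]]. exists x, E. split; auto. Qed.

Lemma bnd_image C E A : is_coarse C -> C E -> bounded C A -> bounded C (image E A).
Proof.
  intros [c1 [c2 [c3 [c4 [c5 [c6 c7]]]]]] HE [x [F [HF HA]]].
  exists x, (comp F E). split; [apply c6; auto|].
  intros z [a [Ha Ez]]. exists a. split; auto. apply HA; auto.
Qed.

Lemma bnd_union C A B : is_coarse C -> bounded C A -> bounded C B ->
  bounded C (fun z => A z \/ B z).
Proof.
  intros HC [x [E1 [H1 HA]]] [y [E2 [H2 HB]]].
  pose proof HC as [c1 [c2 [c3 [c4 [c5 [c6 c7]]]]]].
  destruct (c7 x y) as [H [HH Hxy]].
  exists x, (rel_union E1 (comp H E2)). split.
  - apply c5; auto.
  - intros z [Hz|Hz]; [left; apply HA; auto| right; exists y; split; auto; apply HB; auto].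
Qed.

Definition D C E := rel_sub (@diag X) E /\
  (forall A, bounded C A -> bounded C (image E A)) /\
  (forall A, bounded C A -> bounded C (image (inv E) A)).

Lemma C_in_D C E : is_coarse C -> C E -> D C E.
Proof.
  intros HC HE. pose proof HC as [c1 [c2 [c3 [c4 [c5 [c6 c7]]]]]].
  split; [auto|split]; intros; apply bnd_image; auto.
Qed.

Lemma D_coarse C : is_coarse C -> is_coarse (D C).
Proof.
  intros HC. pose proof HC as [c1 [c2 [c3 [c4 [c5 [c6 c7]]]]]].
  split; [|split; [|split; [|split; [|split; [|split]]]]].
  - split; [intros x y h; exact h|split]; intros A HA; apply bnd_sub with (Z:=A); auto;
      intros z [a [Ha e]]; unfold diag, inv in e; subst; auto.
  - intros E [h _]; exact h.
  - intros E F [d [i1 i2]] dF sub. split; [auto|split]; intros A HA.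
    + apply bnd_sub with (Z:=image E A); auto. intros z [a [Ha e]]. exists a; auto.
    + apply bnd_sub with (Z:=image (inv E) A); auto. intros z [a [Ha e]]. exists a. split; auto. apply sub; auto.
  - intros E [d [i1 i2]]. split; [|split].
    + intros x y e. unfold diag in e; subst. apply d. reflexivity.
    + exact i2.
    + intros A HA. apply bnd_sub with (Z:=image E A); auto.
  - intros E F [d [i1 i2]] [d' [j1 j2]]. split; [|split]; [intros x y e; left; auto| |];
      intros A HA.
    + apply bnd_sub with (Z:=fun z => image E A z \/ image F A z); [|apply bnd_union; auto].
      intros z [a [Ha [e|e]]]; [left|right]; exists a; auto.
    + apply bnd_sub with (Z:=fun z => image (inv E) A z \/ image (inv F) A z); [|apply bnd_union; auto].
      intros z [a [Ha [e|e]]]; [left|right]; exists a; auto.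
  - intros E F [d [i1 i2]] [d' [j1 j2]]. split; [|split].
    + intros x y e. exists y. split; [apply d; auto| apply d'; reflexivity].
    + intros A HA. apply bnd_sub with (Z:=image F (image E A)); auto.
      intros z [a [Ha [b [e1 e2]]]]. exists b. split; auto. exists a; auto.
    + intros A HA. apply bnd_sub with (Z:=image (inv E) (image (inv F) A)); auto.
      intros z [a [Ha [b [e1 e2]]]]. exists b. split; auto. exists a; auto.
  - intros x y. destruct (c7 x y) as [E [HE e]]. exists E. split; auto. apply C_in_D; auto.
Qed.

End H.

Theorem proposition1 (X : Type) (C C' : entourage X -> Prop) :
  extremely_normal C ->
  is_coarse C' ->
  (forall E, C E -> C' E) ->
  maximal C' ->
  (forall Y : X -> Prop, bounded C Y <-> bounded C' Y) /\
  (forall E, C' E <-> uparrow (bounded C) E).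
Proof.
  intros [[HC HCub] Hen] HC' Hsub [[_ HC'ub] Hmax].
  pose proof HC' as [c1 [c2 [c3 [c4 [c5 [c6 c7]]]]]].
  assert (P1 : forall Y : X -> Prop, bounded C Y <-> bounded C' Y).
  { intros Y. split.
    - intros [x [E [HE HY]]]. exists x, E. auto.
    - intros HY. apply NNPP. intros nb. destruct (Hen Y nb) as [E [HE Hl]].
      apply HC'ub. destruct HY as [x [F [HF HY]]].
      exists x, (comp F E). split; [apply c6; auto|].
      intros z _. destruct (Hl z) as [a [Ha e]]. exists a. split; auto. apply HY; auto. }
  split; [exact P1|].
  assert (fwd : forall E, C' E -> uparrow (bounded C) E).
  { intros E HE C'' HC'' Hgen.
    pose proof HC'' as [d1 [d2 [d3 [d4 [d5 [d6 d7]]]]]].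
    assert (G : C'' (rel_union E (inv E))).
    { apply Hgen. split; [|split].
      - intros x y; split; intros [h|h]; [right|left|right|left]; exact h.
      - intros x y e. left. apply (c2 E HE). exact e.
      - intros A HA. apply P1. apply P1 in HA. apply bnd_image; auto. }
    apply (d3 _ _ G); [apply (c2 E HE)|]. intros x y h; left; exact h. }
  assert (UD : forall E, uparrow (bounded C) E -> D C E).
  { intros E HE. apply HE; [apply D_coarse; auto|].
    intros F [sym [d i]]. split; [exact d|split]; auto.
    intros A HA. apply bnd_sub with (Z:=image F A); auto.
    intros z [a [Ha e]]. exists a. split; auto. apply sym; exact e. }
  assert (Ucoarse : is_coarse (uparrow (bounded C))).
  { split; [|split; [|split; [|split; [|split; [|split]]]]].
    - intros C'' [d1 _] _. exact d1.
    - intros E HE. destruct (UD E HE) as [d _]. exact d.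
    - intros E F HE d s C'' HC'' Hg. pose proof HC'' as [_ [_ [d3 _]]]. apply (d3 E); [apply HE; auto|auto|auto].
    - intros E HE C'' HC'' Hg. pose proof HC'' as [_ [_ [_ [d4 _]]]]. apply d4; apply HE; auto.
    - intros E F HE HF C'' HC'' Hg. pose proof HC'' as [_ [_ [_ [_ [d5 _]]]]]. apply d5; [apply HE|apply HF]; auto.
    - intros E F HE HF C'' HC'' Hg. pose proof HC'' as [_ [_ [_ [_ [_ [d6 _]]]]]]. apply d6; [apply HE|apply HF]; auto.
    - intros x y. destruct (c7 x y) as [E [HE e]]. exists E; auto. }
  intros E. split; [apply fwd|].
  intros HE. apply NNPP. intros nE.
  assert (Hb : bounded (uparrow (bounded C)) (fun _ => True)).
  { apply Hmax; auto. exists E; auto. }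
  apply HCub. destruct Hb as [x [F [HF HY]]].
  destruct (UD F HF) as [_ [i _]].
  assert (Hx : bounded C (fun z => z = x)).
  { exists x, (@diag X). split; [destruct HC; assumption|].
    intros y Hy. unfold ball, diag. symmetry; exact Hy. }
  apply bnd_sub with (Z:=image F (fun z => z = x)); [|apply i; auto].
  intros y _. exists x. split; auto. apply HY; auto.
Qed.
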